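(* (1) Let $R$ be one of the following graphs with a distinguished vertex $v$: a star $S_r$ with $r\ge 2$ leaves and center $v$; a healthy spider $S(0,r)$ with $r\ge2$ feet and head $v$; a cycle $C_n$ with $n\ge5$ and $v\in V(C_n)$ arbitrary; a path $P_n$ with $n\ge5$ and $v$ a support vertex of $P_n$. Let $H$ be a graph with no isolated vertices, $V(H)\cap V(R)=\emptyset$, and let $u\in V(H)$ be such that some $\gamma_{tR}(H)$-function $f$ satisfies $f(u)>0$ (and $f(u)=2$ in the case $R=S(0,r)$). Let $G$ be obtained from the disjoint union $H\cup R$ by adding $s$ edges, one of which is $uv$. Then $b_{tR}(G)\le s$. (2) If a graph $G$ (with no isolated vertices) has adjacent support vertices $u,v$ such that $v$ is adjacent to $r\ge2$ leaves, then $b_{tR}(G)\le \deg(v)-r$.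
   Context: A TRDF on $G=(V,E)$ is a function $f:V\to\{0,1,2\}$ such that every $v$ with $f(v)=0$ has a neighbor $u$ with $f(u)=2$ and the subgraph induced by $\{v:f(v)>0\}$ has no isolated vertices; $\gamma_{tR}(G)$ is its minimum weight, and a $\gamma_{tR}(G)$-function is a TRDF of weight $\gamma_{tR}(G)$. $b_{tR}(G)$ is the minimum $|E'|$ such that $G-E'$ has no isolated vertices and $\gamma_{tR}(G-E')>\gamma_{tR}(G)$ ($\infty$ if none). A leaf is a vertex of degree 1; a support vertex is a vertex adjacent to a leaf. The healthy spider $S(0,r)$ is the star $K_{1,r}$ with every edge subdivided once; its center is the head and the vertices at distance 2 from the head are the feet. *)

(* Defs.v *)
From mathcomp Require Import all_boot all_order.
Set Implicit Arguments.
Unset Strict Implicit.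
Unset Printing Implicit Defensive.

Section Graphs.
Variable V : finType.

Definition simple_graph (adj : rel V) : Prop := symmetric adj /\ irreflexive adj.

Definition no_isolated (adj : rel V) : bool := [forall x, [exists y, adj x y]].

Definition deg (adj : rel V) (x : V) : nat := #|[set y | adj x y]|.
Definition leaf (adj : rel V) (x : V) : bool := deg adj x == 1.
Definition support_vertex (adj : rel V) (x : V) : bool :=
  [exists y, adj x y && leaf adj y].

Definition TRDF (adj : rel V) (f : {ffun V -> 'I_3}) : bool :=
  [forall x, (f x == 0 :> nat) ==> [exists y, adj x y && (f y == 2 :> nat)]] &&
  [forall x, (0 < f x) ==> [exists y, adj x y && (0 < f y)]].

Definition weight (f : {ffun V -> 'I_3}) : nat := \sum_(x : V) (f x : nat).

(* minimum weight of a TRDF (the default 2|V| is the weight of f = 2,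
   a TRDF whenever there are no isolated vertices) *)
Definition gamma_tR (adj : rel V) : nat :=
  \big[minn/(2 * #|V|)]_(f : {ffun V -> 'I_3} | TRDF adj f) weight f.

Definition gamma_tR_function (adj : rel V) (f : {ffun V -> 'I_3}) : bool :=
  TRDF adj f && (weight f == gamma_tR adj).

Definition edges (adj : rel V) : {set {set V}} :=
  [set e | [exists x, [exists y, adj x y && (e == [set x; y])]]].

Definition delete_edges (adj : rel V) (E' : {set {set V}}) : rel V :=
  fun x y => adj x y && ([set x; y] \notin E').

Definition bondage_set (adj : rel V) (E' : {set {set V}}) : bool :=
  [&& E' \subset edges adj, no_isolated (delete_edges adj E')
    & gamma_tR adj < gamma_tR (delete_edges adj E')].

(* total Roman bondage number; None stands for infinity *)
Definition b_tR (adj : rel V) : option nat :=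
  if [exists E', bondage_set adj E'] then
    Some (\big[minn/#|edges adj|]_(E' | bondage_set adj E') #|E'|)
  else None.

(* b_tR(G) <= s  (false when b_tR(G) = infinity) *)
Definition b_tR_le (adj : rel V) (s : nat) : bool :=
  if b_tR adj is Some b then b <= s else false.

End Graphs.

Definition rooted_iso (TR M : finType) (adjR : rel TR) (v : TR)
    (adjM : rel M) (w : M) : Prop :=
  exists phi : TR -> M,
    [/\ bijective phi, phi v = w & forall x y, adjR x y = adjM (phi x) (phi y)].

Definition star_rel (r : nat) : rel 'I_r.+1 :=
  fun x y => (val x == 0) (+) (val y == 0).
(* healthy spider S(0,r): head 0, vertices 1..r, foot r+i adjacent to i *)
Definition spider_arc (r : nat) (x y : nat) : bool :=
  ((x == 0) && (1 <= y <= r)) || ((1 <= x <= r) && (y == x + r)).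
Definition spider_rel (r : nat) : rel 'I_(r.*2.+1) :=
  fun x y => spider_arc r x y || spider_arc r y x.
Definition cycle_rel (n : nat) : rel 'I_n :=
  fun x y => (val y == (val x).+1 %% n) || (val x == (val y).+1 %% n).
Definition path_rel (n : nat) : rel 'I_n :=
  fun x y => (val y == (val x).+1) || (val x == (val y).+1).

Arguments star_rel r : clear implicits.
Arguments spider_rel r : clear implicits.
Arguments cycle_rel n : clear implicits.
Arguments path_rel n : clear implicits.

Definition is_rooted_star (TR : finType) (adjR : rel TR) (v : TR) : Prop :=
  exists r, 2 <= r /\ rooted_iso adjR v (star_rel r) (@ord0 r).
Definition is_rooted_spider (TR : finType) (adjR : rel TR) (v : TR) : Prop :=
  exists r, 2 <= r /\ rooted_iso adjR v (spider_rel r) (@ord0 r.*2).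
Definition is_rooted_cycle (TR : finType) (adjR : rel TR) (v : TR) : Prop :=
  exists n, 5 <= n /\ exists w : 'I_n, rooted_iso adjR v (cycle_rel n) w.
Definition is_rooted_path (TR : finType) (adjR : rel TR) (v : TR) : Prop :=
  exists n, 5 <= n /\ exists w : 'I_n,
    support_vertex (path_rel n) w /\ rooted_iso adjR v (path_rel n) w.

Definition union_rel (TH TR : finType) (adjH : rel TH) (adjR : rel TR)
    : rel (TH + TR)%type :=
  fun x y => match x, y with
             | inl a, inl b => adjH a b
             | inr a, inr b => adjR a b
             | _, _ => false
             end.

Definition obtained_by_adding (TH TR : finType) (adjH : rel TH) (adjR : rel TR)
    (adjG : rel (TH + TR)%type) (s : nat) : Prop :=
  (forall x y, union_rel adjH adjR x y -> adjG x y) /\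
  #|edges adjG :\: edges (union_rel adjH adjR)| = s.

(* Part (1), for one family of rooted graphs R; need2 = the hypothesis
   f(u) = 2 is required instead of f(u) > 0 *)
Definition part1_for
    (is_R : forall TR : finType, rel TR -> TR -> Prop) (need2 : bool) : Prop :=
  forall (TH TR : finType) (adjH : rel TH) (adjR : rel TR) (v : TR) (u : TH)
         (adjG : rel (TH + TR)%type) (s : nat),
    simple_graph adjH -> no_isolated adjH ->
    simple_graph adjR -> is_R TR adjR v ->
    (exists f, gamma_tR_function adjH f /\
               (if need2 then (f u : nat) = 2 else 0 < f u)) ->
    simple_graph adjG -> obtained_by_adding adjH adjR adjG s ->
    adjG (inl u) (inr v) ->
    b_tR_le adjG s.

Definition part2 : Prop :=
  forall (V : finType) (adj : rel V) (u v : V),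
    simple_graph adj -> no_isolated adj ->
    adj u v -> support_vertex adj u -> support_vertex adj v ->
    2 <= #|[set x | adj v x && leaf adj x]| ->
    b_tR_le adj (deg adj v - #|[set x | adj v x && leaf adj x]|).

(* Main.v *)
Require Import Defs.
From mathcomp Require Import all_boot all_order.
From mathcomp Require Import zify.
From Stdlib Require Import FunctionalExtensionality.
Set Implicit Arguments. Unset Strict Implicit. Unset Printing Implicit Defensive.

Lemma bigmin_seq_le (I : eqType) (s : seq I) (F : I -> nat) d j :
  j \in s -> \big[minn/d]_(i <- s) F i <= F j.
Proof.
elim: s => // x s IH; rewrite inE big_cons => /orP [/eqP->|/IH H].
  exact: geq_minl.
exact: leq_trans (geq_minr _ _) H.
Qed.

Lemma bigmin_seq_att (I : eqType) (s : seq I) (F : I -> nat) d :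
  \big[minn/d]_(i <- s) F i = d \/ exists2 i, i \in s & \big[minn/d]_(i <- s) F i = F i.
Proof.
elim: s => [|x s IH]; first by left; rewrite big_nil.
rewrite big_cons; case: (leqP (F x) (\big[minn/d]_(i <- s) F i)) => H.
  by right; exists x; rewrite ?inE ?eqxx //; apply/minn_idPl.
case: IH => [->|[i Hi ->]]; first by left.
by right; exists i; rewrite // inE Hi orbT.
Qed.

Lemma bigmin_le (I : finType) (P : pred I) (F : I -> nat) d j :
  P j -> \big[minn/d]_(i | P i) F i <= F j.
Proof.
move=> Pj; rewrite -big_filter; apply: bigmin_seq_le.
by rewrite mem_filter Pj mem_index_enum.
Qed.

Lemma bigmin_att (I : finType) (P : pred I) (F : I -> nat) d :
  \big[minn/d]_(i | P i) F i = d \/ exists2 i, P i & \big[minn/d]_(i | P i) F i = F i.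
Proof.
rewrite -big_filter; case: (bigmin_seq_att [seq i <- index_enum I | P i] F d) => [->|[i]];
  first by left.
by rewrite mem_filter => /andP[Pi _] ->; right; exists i.
Qed.

Section Gen.
Variable V : finType.
Implicit Types (adj : rel V) (f g h : {ffun V -> 'I_3}).

Lemma TRDFP adj f : TRDF adj f <->
  forall x, ((f x : nat) = 0 -> exists y, adj x y /\ (f y : nat) = 2) /\
            (0 < f x -> exists y, adj x y /\ 0 < f y).
Proof.
split.
  case/andP => /forallP H1 /forallP H2 x; split.
    move=> H0; move: (H1 x); rewrite H0 /= => /existsP [y /andP[Ha /eqP Hb]].
    by exists y.
  move=> H0; move: (H2 x); rewrite H0 /= => /existsP [y /andP[Ha Hb]].
  by exists y.
move=> H; apply/andP; split; apply/forallP => x; apply/implyP.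
  move/eqP => /(proj1 (H x)) [y [Ha Hb]]; apply/existsP; exists y.
  by rewrite Ha Hb eqxx.
move=> /(proj2 (H x)) [y [Ha Hb]]; apply/existsP; exists y.
by rewrite Ha Hb.
Qed.

Lemma gamma_le adj f : TRDF adj f -> gamma_tR adj <= weight f.
Proof. move=> Hf. have := @bigmin_le {ffun V -> 'I_3} (fun f => TRDF adj f) (@weight V) (2 * #|V|) f Hf.
exact. Qed.

Definition f2 : {ffun V -> 'I_3} := [ffun _ => ord_max].

Lemma weight_f2 : weight f2 = 2 * #|V|.
Proof.
rewrite /weight (eq_bigr (fun _ => 2)); last by move=> x _; rewrite ffunE.
by rewrite sum_nat_const mulnC.
Qed.

Lemma TRDF_f2 adj : no_isolated adj -> TRDF adj f2.
Proof.
move=> /forallP Hn; apply/TRDFP => x; rewrite !ffunE; split => // _.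
by case/existsP: (Hn x) => y Hy; exists y; rewrite ffunE.
Qed.

Lemma gamma_att adj : no_isolated adj ->
  exists f, TRDF adj f /\ weight f = gamma_tR adj.
Proof.
move=> Hn; rewrite /gamma_tR.
case: (@bigmin_att {ffun V -> 'I_3} (fun f => TRDF adj f) (@weight V) (2 * #|V|)) => [->|[f Hf ->]].
  by exists f2; split; [exact: TRDF_f2 | exact: weight_f2].
by exists f.
Qed.

Lemma gamma_ge adj k : no_isolated adj ->
  (forall f, TRDF adj f -> k <= weight f) -> k <= gamma_tR adj.
Proof. by move=> Hn H; case: (gamma_att Hn) => f [Hf <-]; apply: H. Qed.

Lemma card_setE (P : pred V) : #|[set x | P x]| = \sum_x (P x : nat).
Proof.
rewrite -sum1_card big_mkcond /=; apply: eq_bigr => x _; rewrite inE.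
by case: (P x).
Qed.

Lemma weight_id h :
  weight h + #|[set x | (h x : nat) == 0]| = #|V| + #|[set x | (h x : nat) == 2]|.
Proof.
rewrite !card_setE -big_split /= -sum1_card -big_split /=.
apply: eq_bigr => x _; case: (h x) => [[|[|[|k]]] Hk] //.
Qed.

Lemma lb_n adj h : symmetric adj -> TRDF adj h ->
  (forall y, (h y : nat) = 2 -> (forall a, adj y a -> 0 < h a) \/
     (forall a b c, adj y a -> adj y b -> adj y c -> [|| a == b, a == c | b == c])) ->
  #|V| <= weight h.
Proof.
move=> Hs /TRDFP Ht Hd.
suff : #|[set x | (h x : nat) == 0]| <= #|[set x | (h x : nat) == 2]|.
  by move: (weight_id h); lia.
pose m x := odflt x [pick y | adj x y && ((h y : nat) == 2)].
have Hm x : (h x : nat) = 0 -> adj x (m x) /\ (h (m x) : nat) = 2.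
  move=> H0; rewrite /m; case: pickP => [y /andP[Ha /eqP Hb] | Hn] //=.
  by case: (proj1 (Ht x) H0) => y [Ha Hb]; move: (Hn y); rewrite Ha Hb eqxx.
rewrite -(card_in_imset (f := m)).
  apply: subset_leq_card; apply/subsetP => y /imsetP [x]; rewrite inE => /eqP /Hm [_ H] ->.
  by rewrite inE H.
move=> x1 x2; rewrite !inE => /eqP H1 /eqP H2 Heq.
case: (Hm _ H1) => [A1 B1]; case: (Hm _ H2) => [A2 B2].
rewrite Heq in A1 B1.
have P2 : 0 < h (m x2) by rewrite B2.
case: (proj2 (Ht (m x2)) P2) => c [Ac Pc].
rewrite Hs in A1; rewrite Hs in A2.
case: (Hd _ B2) => [Hall|Htr].
  by move: (Hall _ A1); rewrite H1.
move: (Htr _ _ _ A1 A2 Ac) => /or3P [/eqP //|/eqP E|/eqP E].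
  by move: Pc; rewrite -E H1.
by move: Pc; rewrite -E H2.
Qed.

End Gen.

Section G2.
Variable V : finType.
Implicit Types (adj : rel V).

Lemma bondage_le adj E s : bondage_set adj E -> #|E| <= s -> b_tR_le adj s.
Proof.
move=> HE Hs; rewrite /b_tR_le /b_tR.
have -> : [exists E', bondage_set adj E'] by apply/existsP; exists E.
apply: leq_trans Hs.
exact: (@bigmin_le {set {set V}} (fun E => bondage_set adj E) (fun E => #|E|) _ E HE).
Qed.

Lemma leaf_nbr adj x y z : leaf adj x -> adj x y -> adj x z -> y = z.
Proof.
rewrite /leaf /deg => /cards1P [a Ha] Hy Hz.
have : y \in [set y | adj x y] by rewrite inE.
have : z \in [set y | adj x y] by rewrite inE.
by rewrite Ha !inE => /eqP -> /eqP ->.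
Qed.

Lemma nonleaf_nbr adj x w : no_isolated adj -> ~~ leaf adj x ->
  exists y, adj x y /\ y != w.
Proof.
move=> /forallP Hn Hl.
case: (boolP [exists y, adj x y && (y != w)]) => [/existsP [y /andP [A B]]|H].
  by exists y.
exfalso; move: Hl; rewrite /leaf /deg.
case/existsP: (Hn x) => y0 Hy0.
have Hs : [set y | adj x y] = [set w].
  apply/setP => y; rewrite !inE; apply/idP/idP.
    move=> Hy; apply/negPn/negP => Hne; move/negP: H; apply; apply/existsP.
    by exists y; rewrite Hy.
  move/eqP ->; case: (boolP (y0 == w)) => [/eqP <- //|Hne].
  by move/negP: H; case; apply/existsP; exists y0; rewrite Hy0.
by rewrite Hs cards1.
Qed.

Lemma pair_eq (x y a b : V) : [set x; y] = [set a; b] ->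
  (x = a /\ y = b) \/ (x = b /\ y = a).
Proof.
move=> E.
have hx : x \in [set a; b] by rewrite -E !inE eqxx.
have hy : y \in [set a; b] by rewrite -E !inE eqxx orbT.
have ha : a \in [set x; y] by rewrite E !inE eqxx.
have hb : b \in [set x; y] by rewrite E !inE eqxx orbT.
move: hx hy ha hb; rewrite !inE.
by case/orP => /eqP hx; case/orP => /eqP hy; case/orP => /eqP ha; case/orP => /eqP hb; subst; auto.
Qed.

End G2.

Section Part2.
Variables (V : finType) (adj : rel V) (u v : V).
Hypotheses (Hsg : simple_graph adj) (Hni : no_isolated adj) (Huv : adj u v)
  (Hsu : support_vertex adj u) (Hsv : support_vertex adj v).
Let L := [set x | adj v x && leaf adj x].
Let N := [set x | adj v x && ~~ leaf adj x].
Hypothesis HL : 2 <= #|L|.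
Let E' := [set [set v; x] | x in N].
Let adj' := delete_edges adj E'.

Let Hsym : symmetric adj := proj1 Hsg.
Let Hirr : irreflexive adj := proj2 Hsg.

Lemma adj_neq x y : adj x y -> x != y.
Proof. by apply: contraTneq => ->; rewrite Hirr. Qed.

Lemma inE' x y : ([set x; y] \in E') = ((x == v) && (y \in N)) || ((y == v) && (x \in N)).
Proof.
apply/imsetP/idP.
  case=> z Hz /pair_eq [[-> ->]|[-> ->]]; first by rewrite eqxx Hz.
  by rewrite eqxx Hz orbT.
case/orP => /andP [/eqP -> H]; first by exists y.
by exists x => //; rewrite setUC.
Qed.

Lemma adj'E x y : adj' x y = adj x y && ~~ (((x == v) && (y \in N)) || ((y == v) && (x \in N))).
Proof. by rewrite /adj' /delete_edges inE'. Qed.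

Lemma adj'_sub x y : adj' x y -> adj x y.
Proof. by rewrite adj'E => /andP []. Qed.

Lemma degv : deg adj v = #|L| + #|N|.
Proof.
rewrite /deg -(cardsID [set y | leaf adj y] [set y | adj v y]).
have -> : [set y | adj v y] :&: [set y | leaf adj y] = L by apply/setP => y; rewrite !inE.
have -> : [set y | adj v y] :\: [set y | leaf adj y] = N by apply/setP => y; rewrite !inE andbC.
by [].
Qed.

Lemma cardE' : #|E'| = #|N|.
Proof.
apply: card_in_imset => x y; rewrite !inE => /andP [Hx _] /andP [Hy _].
case/pair_eq => [[_ //]|[E1 E2]].
by move: Hy; rewrite E1 Hirr.
Qed.

Lemma L_nbr l y : l \in L -> adj l y -> y = v.
Proof.
rewrite inE => /andP [Hvl Hl] Hy; apply: (leaf_nbr Hl Hy).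
by rewrite Hsym.
Qed.

Lemma L_ge : #|L| <= deg adj v.
Proof. by rewrite degv leq_addr. Qed.

Lemma v_notleaf : ~~ leaf adj v.
Proof. by rewrite /leaf; apply/eqP => H; move: L_ge; rewrite H; lia. Qed.

Lemma vnL : v \notin L.
Proof. by rewrite inE Hirr. Qed.

Lemma u_notleaf : ~~ leaf adj u.
Proof.
apply/negP => Hl; move: Hsu => /existsP [l /andP [Hul Hll]].
have E : l = v by apply: (leaf_nbr Hl Hul Huv).
by move: v_notleaf; rewrite -E Hll.
Qed.

Lemma uN : u \in N.
Proof. rewrite inE; apply/andP; split; [by rewrite Hsym | exact: u_notleaf]. Qed.

Lemma uv_neq : u != v.
Proof. exact: adj_neq Huv. Qed.

Lemma unL : u \notin L.
Proof. by rewrite inE negb_and u_notleaf orbT. Qed.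

Lemma noiso' : no_isolated adj'.
Proof.
apply/forallP => x; apply/existsP.
case: (boolP (x == v)) => [/eqP ->|Hxv].
  have : 0 < #|L| by lia.
  case/card_gt0P => l Hl; exists l; rewrite adj'E.
  move: Hl; rewrite inE => /andP [A B]; rewrite A /= eqxx /= inE A B /=.
  by rewrite eq_sym (negbTE (adj_neq A)).
case: (boolP (x \in N)) => HxN.
  have Hnl : ~~ leaf adj x by move: HxN; rewrite inE => /andP [].
  case: (nonleaf_nbr v Hni Hnl) => y [Ay Hyv]; exists y.
  by rewrite adj'E Ay (negbTE Hxv) (negbTE Hyv).
move/forallP: Hni => /(_ x) /existsP [y Ay]; exists y.
by rewrite adj'E Ay (negbTE Hxv) (negbTE HxN) /= andbF.
Qed.

Let S := v |: L.

Lemma S_out x y : x \notin S -> adj' x y -> y \notin S.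
Proof.
rewrite !inE negb_or => /andP [Hxv HxL] Hy; apply/negP; case/orP.
  move/eqP => ey; subst y; move: Hy; rewrite adj'E => /andP [A B].
  move: B; rewrite eqxx (negbTE Hxv) /= => HxN.
  move/negP: HxL; apply; rewrite Hsym A /=.
  by move: HxN; rewrite inE Hsym A /= negbK.
move=> HyL; have HyL' : y \in L by rewrite inE.
have Ayx : adj y x by rewrite Hsym; apply: adj'_sub.
by move: Hxv; rewrite (L_nbr HyL' Ayx) eqxx.
Qed.

Lemma wsplit (h : {ffun V -> 'I_3}) :
  weight h = h v + \sum_(x in L) h x + \sum_(x | x \notin S) h x.
Proof.
by rewrite /weight (bigID (fun x => x \in S)) /= big_setU1 ?vnL.
Qed.

Lemma gamma_lt : gamma_tR adj < gamma_tR adj'.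
Proof.
case: (gamma_att noiso') => g [Hg <-].
have /TRDFP Ht := Hg.
pose g' := [ffun x => if x == v then (ord_max : 'I_3) else if x \in L then (ord0 : 'I_3) else g x].
have Hrest : \sum_(x | x \notin S) g' x = \sum_(x | x \notin S) g x.
  apply: eq_bigr => x; rewrite in_setU1 negb_or => /andP [A B].
  by rewrite ffunE (negbTE A) (negbTE B).
have HL0 : \sum_(x in L) g' x = 0.
  apply: big1 => x Hx; rewrite ffunE Hx.
  case: eqP => // E; by move: vnL; rewrite -E Hx.
have Hgv : (g' v : nat) = 2 by rewrite ffunE eqxx.
(* the star part of g weighs at least 3 *)
have L0 : 0 < #|L| by lia.
case/card_gt0P: L0 => l0 Hl0.
have adj'_l y : y \in L -> adj' y v.
  move=> Hy; rewrite adj'E (negbTE (_ : y != v)) /=; last first.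
    by apply: contraTneq Hy => ->; exact: vnL.
  move: Hy; rewrite !inE => /andP [A B]; rewrite Hsym A /= eqxx /=.
  by rewrite B.
have nbr_l y z : y \in L -> adj' y z -> z = v.
  by move=> Hy Hz; apply: (L_nbr Hy); apply: adj'_sub.
have nbr_v y : adj' v y -> y \in L.
  rewrite adj'E eqxx /= => /andP [A B].
  move: B; rewrite negb_or => /andP [B _].
  by rewrite inE A /=; move: B; rewrite inE A /= negbK.
have gv_pos : 0 < g v.
  case: (posnP (g l0)) => H0.
    by case: (proj1 (Ht l0) H0) => y [A B]; rewrite -(nbr_l _ _ Hl0 A) B.
  by case: (proj2 (Ht l0) H0) => y [A B]; rewrite -(nbr_l _ _ Hl0 A).
have star3 : 3 <= g v + \sum_(x in L) g x.
  have : (g v : nat) = 1 \/ (g v : nat) = 2 by case: (g v) gv_pos => [[|[|[|k]]] Hk] //= _; auto.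
  case=> Hv.
    have : #|L| <= \sum_(x in L) g x.
      rewrite -sum1_card; apply: leq_sum => x Hx; rewrite lt0n; apply/eqP => H0.
      case: (proj1 (Ht x) H0) => y [A B].
      by move: B; rewrite (nbr_l _ _ Hx A) Hv.
    lia.
  case: (proj2 (Ht v) (_ : 0 < g v)) => [|y [A B]]; first by rewrite Hv.
  have Hy := nbr_v _ A.
  have : g y <= \sum_(x in L) g x by rewrite (bigD1 y) //=; apply: leq_addr.
  lia.
have Hw : weight g' < weight g.
  rewrite (wsplit g) (wsplit g') Hrest HL0 Hgv; lia.
apply: leq_trans Hw; apply: gamma_le.
apply/TRDFP => x.
case: (boolP (x == v)) => [/eqP ->|Hxv].
  rewrite Hgv; split => // _; exists u; split; first by rewrite Hsym.
  rewrite ffunE (negbTE uv_neq) (negbTE unL).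
  (* g u > 0 via a leaf of u *)
  move: Hsu => /existsP [lu /andP [Aul Hlu]].
  have nbr_lu z : adj' lu z -> z = u.
    move=> Hz; apply: (leaf_nbr Hlu (adj'_sub Hz)); by rewrite Hsym.
  case: (posnP (g lu)) => H0.
    by case: (proj1 (Ht lu) H0) => y [A B]; rewrite -(nbr_lu _ A) B.
  by case: (proj2 (Ht lu) H0) => y [A B]; rewrite -(nbr_lu _ A).
case: (boolP (x \in L)) => HxL.
  rewrite ffunE (negbTE Hxv) HxL /=; split => // _; exists v; split => //.
  by apply: adj'_sub; apply: adj'_l.
have HxS : x \notin S by rewrite in_setU1 negb_or Hxv HxL.
have gx : g' x = g x by rewrite ffunE (negbTE Hxv) (negbTE HxL).
have gy y : y \notin S -> g' y = g y.
  by rewrite in_setU1 negb_or => /andP [A B]; rewrite ffunE (negbTE A) (negbTE B).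
rewrite gx; split.
  move=> H0; case: (proj1 (Ht x) H0) => y [A B]; exists y.
  by rewrite (gy _ (S_out HxS A)) (adj'_sub A).
move=> H0; case: (proj2 (Ht x) H0) => y [A B]; exists y.
by rewrite (gy _ (S_out HxS A)) (adj'_sub A).
Qed.

Lemma part2_main : b_tR_le adj (deg adj v - #|L|).
Proof.
apply: (@bondage_le _ adj E'); last by rewrite cardE' degv; lia.
apply/and3P; split.
- apply/subsetP => e /imsetP [x Hx ->]; rewrite inE; apply/existsP; exists v.
  apply/existsP; exists x; rewrite eqxx andbT.
  by move: Hx; rewrite inE => /andP [].
- exact: noiso'.
- exact: gamma_lt.
Qed.

End Part2.

Lemma part2_proof : part2.
Proof.
move=> V adj u v Hsg Hni Huv Hsu Hsv HL.
exact: (part2_main Hsg Hni Huv Hsu Hsv HL).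
Qed.


Definition relaxed (T : finType) (adj : rel T) (v : T) (b : bool) (g : {ffun T -> 'I_3}) : Prop :=
  forall x, ((g x : nat) = 0 -> (exists y, adj x y /\ (g y : nat) = 2) \/ (b /\ x = v)) /\
            (0 < g x -> (exists y, adj x y /\ 0 < g y) \/ x = v).

Definition good_root (TR : finType) (adjR : rel TR) (v : TR) (b : bool) : Prop :=
  no_isolated adjR /\ exists L, (forall g, TRDF adjR g -> L <= weight g) /\
     exists g, relaxed adjR v b g /\ weight g < L.

Lemma weight_sum (TH TR : finType) (h : {ffun (TH + TR)%type -> 'I_3}) :
  weight h = weight [ffun a => h (inl a)] + weight [ffun b => h (inr b)].
Proof.
rewrite /weight big_sumType; congr (_ + _); apply: eq_bigr => x _; by rewrite ffunE.
Qed.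

Lemma part1_gen (is_R : forall TR : finType, rel TR -> TR -> Prop) (b : bool) :
  (forall (TR : finType) (adjR : rel TR) v, simple_graph adjR -> is_R TR adjR v -> good_root adjR v b) ->
  part1_for is_R b.
Proof.
move=> Hgood TH TR adjH adjR v u adjG s HsH HnH HsR HR [f [Hf Hfu]] HsG [Hsub Hcard] HuvG.
case: (Hgood _ _ _ HsR HR) => HnR [L [HLb [g [Hrel Hgw]]]].
set U := union_rel adjH adjR.
set E' := edges adjG :\: edges U.
have HsU : symmetric U.
  rewrite /U; move=> [a|a] [c|c] //=; [exact: (proj1 HsH) | exact: (proj1 HsR)].
have HsymG : symmetric adjG := proj1 HsG.
have Hdel : delete_edges adjG E' = U.
  apply: functional_extensionality => x; apply: functional_extensionality => y.
  rewrite /delete_edges /E' !inE; apply/idP/idP.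
    case/andP => A; rewrite negb_and negbK.
    have -> : [exists x0, exists y0, adjG x0 y0 && ([set x; y] == [set x0; y0])].
      by apply/existsP; exists x; apply/existsP; exists y; rewrite A eqxx.
    rewrite orbF => /existsP [a /existsP [b' /andP [Hab /eqP E]]].
    by case: (pair_eq E) => [[-> ->]|[-> ->]] //; rewrite HsU.
  move=> Hxy; rewrite Hsub //= negb_and negbK.
  apply/orP; left; apply/existsP; exists x; apply/existsP; exists y.
  by rewrite Hxy eqxx.
have HnU : no_isolated U.
  apply/forallP; case=> a.
    by case/forallP/(_ a)/existsP: HnH => y Hy; apply/existsP; exists (inl y).
  by case/forallP/(_ a)/existsP: HnR => y Hy; apply/existsP; exists (inr y).
case/andP: Hf => Hf /eqP Hwf.
have HgU : gamma_tR adjH + L <= gamma_tR U.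
  apply: gamma_ge => // h /TRDFP Hh.
  rewrite weight_sum; apply: leq_add.
    apply: gamma_le; apply/TRDFP => a; rewrite !ffunE; split.
      case/(proj1 (Hh (inl a))) => [[y|y] [A B]] //; exists y; by rewrite ffunE.
    case/(proj2 (Hh (inl a))) => [[y|y] [A B]] //; exists y; by rewrite ffunE.
  apply: HLb; apply/TRDFP => a; rewrite !ffunE; split.
    case/(proj1 (Hh (inr a))) => [[y|y] [A B]] //; exists y; by rewrite ffunE.
  case/(proj2 (Hh (inr a))) => [[y|y] [A B]] //; exists y; by rewrite ffunE.
pose F : {ffun (TH + TR)%type -> 'I_3} :=
  [ffun z => match z with inl a => f a | inr c => g c end].
have HwF : weight F = weight f + weight g.
  rewrite weight_sum; congr (_ + _); congr weight; apply/ffunP => x; by rewrite !ffunE.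
have Hfu_pos : 0 < f u by move: Hfu; case: b {Hgood Hrel} => // ->.
have HF : TRDF adjG F.
  apply/TRDFP; case=> a; rewrite ffunE.
    move/TRDFP: Hf => /(_ a) [H1 H2]; split.
      by case/H1 => y [A B]; exists (inl y); rewrite ffunE Hsub.
    by case/H2 => y [A B]; exists (inl y); rewrite ffunE Hsub.
  case: (Hrel a) => [H1 H2]; split.
    case/H1 => [[y [A B]]|[Hb ->]].
      by exists (inr y); rewrite ffunE Hsub.
    exists (inl u); rewrite ffunE HsymG HuvG; split => //.
    by move: Hfu; rewrite Hb.
  case/H2 => [[y [A B]]|->].
    by exists (inr y); rewrite ffunE Hsub.
  by exists (inl u); rewrite ffunE HsymG HuvG.
apply: (@bondage_le _ adjG E'); last by rewrite /E' Hcard.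
rewrite /bondage_set Hdel; apply/and3P; split => //.
  exact: subsetDl.
apply: (leq_ltn_trans (gamma_le HF)); rewrite HwF Hwf.
apply: leq_trans HgU; lia.
Qed.

Lemma weight_reindex (T M : finType) (phi : T -> M) (psi : M -> T) (h : {ffun M -> 'I_3}) :
  cancel phi psi -> cancel psi phi ->
  weight [ffun x => h (phi x)] = weight h.
Proof.
move=> H1 H2; rewrite /weight (reindex phi) /=; last by apply: onW_bij; exists psi.
by apply: eq_bigr => x _; rewrite ffunE.
Qed.

Lemma iso_good (TR M : finType) (adjR : rel TR) v (adjM : rel M) w b :
  rooted_iso adjR v adjM w -> good_root adjM w b -> good_root adjR v b.
Proof.
case=> phi [[psi H1 H2] Hv Hadj] [HnM [L [HLb [h [Hrel Hw]]]]].
split.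
  apply/forallP => x; case/forallP/(_ (phi x))/existsP: HnM => m Hm.
  by apply/existsP; exists (psi m); rewrite Hadj H2.
exists L; split.
  move=> g /TRDFP Hg.
  have -> : weight g = weight [ffun m => g (psi m)].
    by rewrite (weight_reindex _ H2 H1).
  apply: HLb; apply/TRDFP => m; rewrite ffunE; split.
    by case/(proj1 (Hg (psi m))) => y [A B]; exists (phi y); rewrite ffunE H1 -(H2 m) -Hadj.
  by case/(proj2 (Hg (psi m))) => y [A B]; exists (phi y); rewrite ffunE H1 -(H2 m) -Hadj.
exists [ffun x => h (phi x)]; split; last by rewrite (weight_reindex _ H1 H2).
move=> x; rewrite ffunE; case: (Hrel (phi x)) => [R1 R2]; split.
  case/R1 => [[m [A B]]|[Hb E]].
    by left; exists (psi m); rewrite ffunE Hadj H2.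
  by right; split => //; apply: (can_inj H1); rewrite E Hv.
case/R2 => [[m [A B]]|E].
  by left; exists (psi m); rewrite ffunE Hadj H2.
by right; apply: (can_inj H1); rewrite E Hv.
Qed.

Lemma rooted_iso_comp (A B C : finType) (adjA : rel A) a (adjB : rel B) b' (adjC : rel C) c :
  rooted_iso adjA a adjB b' -> rooted_iso adjB b' adjC c -> rooted_iso adjA a adjC c.
Proof.
case=> phi [[psi H1 H2] Hv Hadj] [phi' [[psi' H1' H2'] Hv' Hadj']].
exists (phi' \o phi); split => /=.
- by exists (psi \o psi') => x /=; rewrite ?H1' ?H1 ?H2 ?H2'.
- by rewrite Hv Hv'.
- by move=> x y; rewrite Hadj Hadj'.
Qed.

Lemma weight_ge2 (T : finType) (h : {ffun T -> 'I_3}) a b :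
  a != b -> h a + h b <= weight h.
Proof.
move=> Hab; rewrite /weight (bigD1 a) //= (bigD1 b) /= ?(eq_sym b) ?Hab //.
by rewrite addnA leq_addr.
Qed.

Lemma weight_ge3 (T : finType) (h : {ffun T -> 'I_3}) a b c :
  a != b -> a != c -> b != c -> h a + h b + h c <= weight h.
Proof.
move=> Hab Hac Hbc; rewrite /weight (bigD1 a) //= (bigD1 b) /= ?(eq_sym b) ?Hab //.
rewrite (bigD1 c) /= ?(eq_sym c) ?Hac ?Hbc //.
by rewrite !addnA leq_addr.
Qed.

Definition i3 (k : nat) : 'I_3 := inord k.
Lemma i3E k : k < 3 -> (i3 k : nat) = k.
Proof. by move=> H; rewrite /i3 inordK. Qed.

Lemma star_good r : 2 <= r -> good_root (star_rel r) ord0 false.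
Proof.
move=> Hr.
pose l1 : 'I_r.+1 := inord 1. pose l2 : 'I_r.+1 := inord 2.
have vl1 : (l1 : nat) = 1 by rewrite /l1 inordK //; lia.
have vl2 : (l2 : nat) = 2 by rewrite /l2 inordK //; lia.
have Hleaf (l y : 'I_r.+1) : (l : nat) != 0 -> star_rel r l y -> y = ord0.
  by move=> Hl; rewrite /star_rel /= (negbTE Hl) /= => /eqP H; apply: val_inj.
split.
  apply/forallP => x; apply/existsP.
  case: (eqVneq (x : nat) 0) => Hx.
    by exists l1; rewrite /star_rel /= Hx vl1.
  by exists ord0; rewrite /star_rel /= (negbTE Hx).
exists 3; split.
  move=> h /TRDFP Ht.
  have h0 : 0 < h ord0.
    case: (posnP (h l1)) => H0.
      case: (proj1 (Ht l1) H0) => y [A B].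
      by rewrite -(Hleaf l1 y) ?B // vl1.
    case: (proj2 (Ht l1) H0) => y [A B].
    by rewrite -(Hleaf l1 y) ?vl1.
  have : (h ord0 : nat) = 1 \/ (h ord0 : nat) = 2.
    by move: h0 (ltn_ord (h ord0)); lia.
  case=> H.
    have Hpos (l : 'I_r.+1) : (l : nat) != 0 -> 0 < h l.
      move=> Hl; rewrite lt0n; apply/eqP => H0.
      case: (proj1 (Ht l) H0) => y [A B].
      by move: B; rewrite (Hleaf l y Hl A) H.
    have := @weight_ge3 _ h ord0 l1 l2.
    have := Hpos l1; have := Hpos l2.
    rewrite vl1 vl2 /=; move=> P2 P1.
    have P1' := P1 isT; have P2' := P2 isT.
    have D1 : ord0 != l1 by rewrite -val_eqE /= vl1.
    have D2 : ord0 != l2 by rewrite -val_eqE /= vl2.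
    have D3 : l1 != l2 by rewrite -val_eqE /= vl1 vl2.
    move=> /(_ D1 D2 D3); rewrite H; lia.
  case: (proj2 (Ht ord0) h0) => y [A B].
  have D : ord0 != y by apply/eqP => E; move: A; rewrite -E /star_rel /=.
  have := weight_ge2 h D; lia.
exists [ffun m : 'I_r.+1 => if (m : nat) == 0 then i3 2 else i3 0]; split.
  move=> x; rewrite ffunE; case: (eqVneq (x : nat) 0) => Hx.
    rewrite i3E //; split => // _; right; exact: val_inj.
  rewrite i3E //; split => // _; left; exists ord0; rewrite ffunE /= i3E //.
  by rewrite /star_rel /= (negbTE Hx).
rewrite /weight big_ord_recl ffunE /= i3E // big1 //.
move=> i _; rewrite ffunE /=.
by rewrite i3E.
Qed.

Lemma dup_vals n (a b c : 'I_n) (p q : nat) :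
  (a = p :> nat \/ a = q :> nat) -> (b = p :> nat \/ b = q :> nat) ->
  (c = p :> nat \/ c = q :> nat) -> [|| a == b, a == c | b == c].
Proof. rewrite -!val_eqE /=; lia. Qed.

Lemma cardT_ord n : #|{: 'I_n}| = n.
Proof. exact: card_ord. Qed.

Lemma spider_good r : 2 <= r -> good_root (spider_rel r) ord0 true.
Proof.
move=> Hr.
have Hsym : symmetric (spider_rel r) by move=> x y; rewrite /spider_rel orbC.
have vin (k : nat) : k < r.*2.+1 -> ((inord k : 'I_r.*2.+1) : nat) = k.
  by move=> H; rewrite inordK.
split.
  apply/forallP => x; apply/existsP; have := ltn_ord x.
  case: (eqVneq (x : nat) 0) => Hx Hlt.
    exists (inord 1); rewrite /spider_rel /spider_arc /= vin; lia.
  case: (leqP (x : nat) r) => Hxr.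
    exists ord0; rewrite /spider_rel /spider_arc /=; lia.
  exists (inord (x - r)); rewrite /spider_rel /spider_arc /= vin; lia.
exists r.*2.+1; split.
  move=> h Hh; have /TRDFP Ht := Hh.
  have mid_pos (a : 'I_r.*2.+1) : 1 <= a <= r -> 0 < h a.
    move=> Ha; pose F : 'I_r.*2.+1 := inord (a + r).
    have vF : (F : nat) = a + r by rewrite vin //; lia.
    have nbrF z : spider_rel r F z -> z = a.
      move=> Hz; apply: val_inj => /=; move: Hz; rewrite /spider_rel /spider_arc /= vF; lia.
    case: (posnP (h F)) => H0.
      by case: (proj1 (Ht F) H0) => y [A B]; rewrite -(nbrF _ A) B.
    by case: (proj2 (Ht F) H0) => y [A B]; rewrite -(nbrF _ A).
  rewrite -{1}(cardT_ord r.*2.+1); apply: (lb_n Hsym Hh) => y Hy.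
  have := ltn_ord y.
  case: (eqVneq (y : nat) 0) => Hy0 Hlt.
    left => a Ha; apply: mid_pos; move: Ha; rewrite /spider_rel /spider_arc /= Hy0; lia.
  right => a b c Ha Hb Hc.
  case: (leqP (y : nat) r) => Hyr.
    apply: (@dup_vals _ _ _ _ 0 (y + r)); [move: Ha|move: Hb|move: Hc];
      rewrite /spider_rel /spider_arc /=; lia.
  apply: (@dup_vals _ _ _ _ (y - r) (y - r)); [move: Ha|move: Hb|move: Hc];
    rewrite /spider_rel /spider_arc /=; lia.
exists [ffun m : 'I_r.*2.+1 => if (m : nat) == 0 then i3 0 else i3 1]; split.
  move=> x; rewrite ffunE; have := ltn_ord x.
  case: (eqVneq (x : nat) 0) => Hx Hlt.
    rewrite i3E //; split => // _; right; split => //; exact: val_inj.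
  rewrite i3E //; split => // _; left.
  case: (leqP (x : nat) r) => Hxr.
    exists (inord (x + r)); rewrite ffunE vin; last by lia.
    rewrite /spider_rel /spider_arc /= vin; last by lia.
    split; first lia.
    case: eqP => H; [lia|by rewrite i3E].
  exists (inord (x - r)); rewrite ffunE vin; last by lia.
  rewrite /spider_rel /spider_arc /= vin; last by lia.
  split; first lia.
  case: eqP => H; [lia|by rewrite i3E].
set g := finfun _.
have W := weight_id g.
have E0 : [set x | (g x : nat) == 0] = [set ord0].
  apply/setP => x; rewrite !inE ffunE -val_eqE /=.
  by case: ifP => H; rewrite i3E // H.
have E2 : [set x | (g x : nat) == 2] = set0.
  apply/setP => x; rewrite !inE ffunE.
  by case: ifP => H; rewrite i3E.
move: W; rewrite E0 E2 cards1 cards0 cardT_ord; lia.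
Qed.

Lemma modS N x : x < N -> x.+1 %% N = (if x.+1 == N then 0 else x.+1).
Proof.
move=> H; case: ifP => [/eqP ->|/eqP E]; first exact: modnn.
by rewrite modn_small //; lia.
Qed.

Lemma cycle_relP N (x y : 'I_N) : cycle_rel N x y =
  [|| ((y == x.+1 :> nat) && (x.+1 < N)), ((y == 0 :> nat) && (x.+1 == N)),
      ((x == y.+1 :> nat) && (y.+1 < N)) | ((x == 0 :> nat) && (y.+1 == N))].
Proof.
rewrite /cycle_rel /= !modS //; have := ltn_ord x; have := ltn_ord y.
case: ifP => /eqP H1; case: ifP => /eqP H2; lia.
Qed.

Lemma rot_step N k (x y : nat) : y < N ->
  (y == x.+1 %% N) = ((y + k) %% N == ((x + k) %% N).+1 %% N).
Proof.
move=> Hy; rewrite -[((x + k) %% N).+1]addn1 modnDml addnAC addn1 eqn_modDr.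
by rewrite (modn_small Hy).
Qed.

Definition rot n (k : nat) (x : 'I_n.+1) : 'I_n.+1 := inord ((x + k) %% n.+1).

Lemma rotE n k (x : 'I_n.+1) : (rot k x : nat) = (x + k) %% n.+1.
Proof. by rewrite /rot inordK // ltn_pmod. Qed.

Lemma rot_inv n (a b : nat) (x : 'I_n.+1) : a + b = n.+1 -> rot a (rot b x) = x.
Proof.
move=> Hab; apply: val_inj => /=; rewrite !rotE modnDml -addnA (addnC b) Hab.
by rewrite modnDr modn_small.
Qed.

Lemma cycle_rot n (w : 'I_n.+1) : rooted_iso (cycle_rel n.+1) w (cycle_rel n.+1) ord0.
Proof.
have Hw := ltn_ord w.
exists (rot (n.+1 - w)); split.
- by exists (rot w) => x; apply: rot_inv; lia.
- apply: val_inj => /=; rewrite rotE subnKC ?modnn //; lia.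
- move=> x y; rewrite /cycle_rel /= !rotE.
  by rewrite -!rot_step // ltn_pmod.
Qed.

Lemma cycle_good0 n : 4 <= n -> good_root (cycle_rel n.+1) ord0 false.
Proof.
move=> Hn.
have Hsym : symmetric (cycle_rel n.+1) by move=> x y; rewrite /cycle_rel orbC.
have vin (k : nat) : k < n.+1 -> ((inord k : 'I_n.+1) : nat) = k.
  by move=> H; rewrite inordK.
split.
  apply/forallP => x; apply/existsP; have := ltn_ord x => Hx.
  case: (ltnP (x : nat) n) => Hxn.
    by exists (inord x.+1); rewrite cycle_relP vin; lia.
  by exists ord0; rewrite cycle_relP /=; lia.
exists n.+1; split.
  move=> h Hh; rewrite -{1}(cardT_ord n.+1); apply: (lb_n Hsym Hh) => y Hy.
  right => a b c Ha Hb Hc; have := ltn_ord y => Hy'.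
  case: (ltnP (y : nat) n) => Hyn; case: (eqVneq (y : nat) 0) => Hy0.
  - apply: (@dup_vals _ _ _ _ (y.+1) n); [move: Ha|move: Hb|move: Hc];
      rewrite cycle_relP; have := ltn_ord a; have := ltn_ord b; have := ltn_ord c; lia.
  - apply: (@dup_vals _ _ _ _ (y.+1) (y.-1)); [move: Ha|move: Hb|move: Hc];
      rewrite cycle_relP; have := ltn_ord a; have := ltn_ord b; have := ltn_ord c; lia.
  - lia.
  - apply: (@dup_vals _ _ _ _ 0 (y.-1)); [move: Ha|move: Hb|move: Hc];
      rewrite cycle_relP; have := ltn_ord a; have := ltn_ord b; have := ltn_ord c; lia.
pose h := [ffun m : 'I_n.+1 =>
  if (m : nat) == 0 then i3 2 else if ((m : nat) == 1) || ((m : nat) == n) then i3 0 else i3 1].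
have hE (m : 'I_n.+1) : (h m : nat) =
   (if (m : nat) == 0 then 2 else if ((m : nat) == 1) || ((m : nat) == n) then 0 else 1).
  by rewrite ffunE; case: ifP => _; [|case: ifP => _]; rewrite i3E.
have h1 (m : 'I_n.+1) : (m : nat) != 0 -> (m : nat) != 1 -> (m : nat) != n -> (h m : nat) = 1.
  by move=> A B C; rewrite hE (negbTE A) (negbTE B) (negbTE C).
have h2 (m : 'I_n.+1) : (m : nat) = 0 -> (h m : nat) = 2 by move=> A; rewrite hE A.
have h0 (m : 'I_n.+1) : (m : nat) != 0 -> (h m : nat) = 0 -> ((m : nat) == 1) || ((m : nat) == n).
  by move=> A; rewrite hE (negbTE A); case: ifP.
exists h; split.
  move=> x; have := ltn_ord x => Hx; split.
    case: (eqVneq (x : nat) 0) => Hx0; first by rewrite h2.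
    move=> /(h0 _ Hx0) H01; left; exists ord0; rewrite h2 // cycle_relP /=; split => //.
    lia.
  move=> Hp; case: (eqVneq (x : nat) 0) => Hx0; first by right; apply: val_inj.
  have Hx1 : ~~ (((x : nat) == 1) || ((x : nat) == n)).
    by move: Hp; rewrite hE (negbTE Hx0); case: ifP.
  left; case: (ltnP (x : nat) n.-1) => Hxn.
    exists (inord x.+1); rewrite cycle_relP h1 vin //; try lia.
  exists (inord x.-1); rewrite cycle_relP h1 vin //; try lia.
have W := weight_id h.
have E0 : [set x | (h x : nat) == 0] = [set inord 1; inord n].
  apply/setP => x; rewrite !inE hE -!val_eqE /= !vin //; try lia.
  by case: ifP => H1; [|case: ifP => H2]; lia.
have E2 : [set x | (h x : nat) == 2] = [set ord0].
  apply/setP => x; rewrite !inE hE -val_eqE /=.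
  by case: ifP => H1; [|case: ifP => H2]; lia.
have D : (inord 1 : 'I_n.+1) != inord n by rewrite -val_eqE /= !vin //; lia.
move: W; rewrite E0 E2 cards1 cards2 D cardT_ord; lia.
Qed.

Lemma cycle_good (TR : finType) (adjR : rel TR) v :
  is_rooted_cycle adjR v -> good_root adjR v false.
Proof.
case=> [[|n] [Hn [w Hiso]]]; first by [].
apply: (iso_good (rooted_iso_comp Hiso (cycle_rot w))).
apply: cycle_good0; lia.
Qed.

Lemma path_good1 n : 4 <= n -> good_root (path_rel n.+1) (inord 1) false.
Proof.
move=> Hn.
have Hsym : symmetric (path_rel n.+1) by move=> x y; rewrite /path_rel orbC.
have vin (k : nat) : k < n.+1 -> ((inord k : 'I_n.+1) : nat) = k.
  by move=> H; rewrite inordK.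
split.
  apply/forallP => x; apply/existsP; have := ltn_ord x => Hx.
  case: (ltnP (x : nat) n) => Hxn.
    by exists (inord x.+1); rewrite /path_rel /= vin; lia.
  by exists (inord x.-1); rewrite /path_rel /= vin; lia.
exists n.+1; split.
  move=> h Hh; rewrite -{1}(cardT_ord n.+1); apply: (lb_n Hsym Hh) => y Hy.
  right => a b c Ha Hb Hc.
  apply: (@dup_vals _ _ _ _ (y.+1) (y.-1)); [move: Ha|move: Hb|move: Hc];
    rewrite /path_rel /=; lia.
pose h := [ffun m : 'I_n.+1 =>
  if (m : nat) == 1 then i3 2 else if ((m : nat) == 0) || ((m : nat) == 2) then i3 0 else i3 1].
have hE (m : 'I_n.+1) : (h m : nat) =
   (if (m : nat) == 1 then 2 else if ((m : nat) == 0) || ((m : nat) == 2) then 0 else 1).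
  by rewrite ffunE; case: ifP => _; [|case: ifP => _]; rewrite i3E.
have h1 (m : 'I_n.+1) : (m : nat) != 1 -> (m : nat) != 0 -> (m : nat) != 2 -> (h m : nat) = 1.
  by move=> A B C; rewrite hE (negbTE A) (negbTE B) (negbTE C).
have h2 (m : 'I_n.+1) : (m : nat) = 1 -> (h m : nat) = 2 by move=> A; rewrite hE A.
have h0 (m : 'I_n.+1) : (m : nat) != 1 -> (h m : nat) = 0 -> ((m : nat) == 0) || ((m : nat) == 2).
  by move=> A; rewrite hE (negbTE A); case: ifP.
have Hw1 : (h (inord 1) : nat) = 2.
  by apply: h2; rewrite inordK //; lia.
exists h; split.
  move=> x; have := ltn_ord x => Hx; split.
    case: (eqVneq (x : nat) 1) => Hx0; first by rewrite h2.
    move=> /(h0 _ Hx0) H01; left; exists (inord 1); rewrite Hw1.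
    rewrite /path_rel /= vin; [split => //; lia | lia].
  move=> Hp; case: (eqVneq (x : nat) 1) => Hx0; first by right; apply: val_inj; rewrite /= inordK //; lia.
  have Hx1 : ~~ (((x : nat) == 0) || ((x : nat) == 2)).
    by move: Hp; rewrite hE (negbTE Hx0); case: ifP.
  left; case: (ltnP (x : nat) n) => Hxn.
    exists (inord x.+1); rewrite /path_rel /= h1 vin //; try lia.
  exists (inord x.-1); rewrite /path_rel /= h1 vin //; try lia.
have W := weight_id h.
have E0 : [set x | (h x : nat) == 0] = [set inord 0; inord 2].
  apply/setP => x; rewrite !inE hE -!val_eqE /= !vin //; try lia.
  by case: ifP => H1; [|case: ifP => H2]; lia.
have E2 : [set x | (h x : nat) == 2] = [set inord 1].
  apply/setP => x; rewrite !inE hE -val_eqE /= vin; last lia.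
  by case: ifP => H1; [|case: ifP => H2]; lia.
have D : (inord 0 : 'I_n.+1) != inord 2 by rewrite -val_eqE /= !vin //; lia.
move: W; rewrite E0 E2 cards1 cards2 D cardT_ord; lia.
Qed.

Lemma path_support n (w : 'I_n.+1) : 2 <= n -> support_vertex (path_rel n.+1) w ->
  (w : nat) = 1 \/ (w : nat) = n.-1.
Proof.
move=> Hn /existsP [y /andP [A B]].
have Hy : (y : nat) = 0 \/ (y : nat) = n.
  have := ltn_ord y => Hy.
  case: (posnP (y : nat)) => Hy0; first by left.
  case: (eqVneq (y : nat) n) => Hyn; first by right.
  exfalso; move: B; rewrite /leaf /deg.
  have : 2 <= #|[set z | path_rel n.+1 y z]|.
    have <- : #|[set (inord y.-1 : 'I_n.+1); inord y.+1]| = 2.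
      rewrite cards2; case: eqP => // /(congr1 (@nat_of_ord _)).
      rewrite !inordK; lia.
    apply: subset_leq_card; apply/subsetP => z; rewrite !inE.
    case/orP => /eqP ->; rewrite /path_rel /= inordK; lia.
  by move=> H /eqP E; rewrite E in H.
move: A; rewrite /path_rel /=; have := ltn_ord w; lia.
Qed.

Lemma path_good (TR : finType) (adjR : rel TR) v :
  is_rooted_path adjR v -> good_root adjR v false.
Proof.
case=> [[|n] [Hn [w [Hs Hiso]]]]; first by [].
have Hn' : 4 <= n by lia.
case: (path_support (ltnW (ltnW Hn')) Hs) => Hw.
  have E : w = inord 1 by apply: val_inj; rewrite /= inordK; lia.
  by rewrite E in Hiso; exact: (iso_good Hiso (path_good1 Hn')).
have Hrev : rooted_iso (path_rel n.+1) w (path_rel n.+1) (inord 1).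
  exists (@rev_ord n.+1); split.
  - by exists (@rev_ord n.+1) => x; rewrite rev_ordK.
  - apply: val_inj; rewrite /= inordK; lia.
  - move=> x y; rewrite /path_rel /=; have := ltn_ord x; have := ltn_ord y; lia.
exact: (iso_good (rooted_iso_comp Hiso Hrev) (path_good1 Hn')).
Qed.


Theorem mainTheorem9 :
  [/\ part1_for is_rooted_star false,
      part1_for is_rooted_spider true,
      part1_for is_rooted_cycle false,
      part1_for is_rooted_path false
    & part2].
Proof.
split.
- apply: part1_gen => TR adjR v _ [r [Hr Hiso]]; exact: (iso_good Hiso (star_good Hr)).
- apply: part1_gen => TR adjR v _ [r [Hr Hiso]]; exact: (iso_good Hiso (spider_good Hr)).
- apply: part1_gen => TR adjR v _ H; exact: cycle_good.
- apply: part1_gen => TR adjR v _ H; exact: path_good.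
- exact: part2_proof.
Qed.
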